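(* Let $\mathcal C$ be a $\Delta$-complex labeled over $B(X,P)$, let $C$ be a $k$-cell of $\mathcal C$ with $k\ge2$ and characteristic map $\sigma\colon\Delta^k\to\mathcal C$. Let $q$ be any closed generalized path based at $v_0$ in $\partial\Delta^k$ (where $\partial\Delta^k$ is regarded as a $\Delta$-complex whose cells are the proper faces of $\Delta^k$), and let $p=\sigma(q)$ be its image generalized path in $\mathcal C$ (each face $F$ of $q$ replaced by the cell of $\mathcal C$ whose characteristic map is $\sigma|_F$). Then $\ell(C)\le\ell(p)$ in $M(X,P)$.
   Context: A $\Delta$-complex is a CW-complex in which each $k$-cell $c$ has a distinguished characteristic map $\sigma_c\colon\Delta^k\to\mathcal C$, $\Delta^k=[v_0,\dots,v_k]$ the standard simplex with ordered vertices, such that the restriction of $\sigma_c$ to each $(k-1)$-face (identified order-preservingly with $\Delta^{k-1}$) is the distinguished characteristic map of a $(k-1)$-cell. The root of $c$ is $\alpha(c)=\sigma_c(v_0)$; a $1$-cell $e$ is directed from $\alpha(e)=\sigma_e(v_0)$ to $\omega(e)=\sigma_e(v_1)$, and a formal inverse $e^{-1}$ with $\alpha(e^{-1})=\omega(e)$, $\omega(e^{-1})=\alpha(e)$ is adjoined. A generalized path is a sequence $e_1\cdots e_s$ ($s\ge0$) where each $e_i$ is a cell of dimension $\ge2$, a $1$-cell, or the formal inverse of a $1$-cell, with $\omega(e_{i-1})=\alpha(e_i)$, where for cells of dimension $\ge2$ one sets $\omega(c)=\alpha(c)$; it is closed at $v$ if it starts and ends at $v$. An immersion is a continuous map that is a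 local homeomorphism onto its image and commutes with characteristic maps. $B(X,P)$ is a $\Delta$-complex with one $0$-cell, $1$-cells indexed by $X$, $k$-cells ($2\le k\le n$) indexed by $P_k$, index sets pairwise disjoint, $P=\bigcup P_k$. $\mathcal C$ is labeled over $B(X,P)$ via an immersion $f_{\mathcal C}\colon\mathcal C\to B(X,P)$; $\ell(c)$ is the index of $f_{\mathcal C}(c)$, $\ell(e^{-1})=\ell(e)^{-1}$, and the label of a generalized path is the concatenated word in $(X\cup X^{-1}\cup P)^*$, read in $M(X,P)$. Boundary labels: for a $k$-cell $c$ ($k\ge2$) with characteristic map $\sigma$, let $c_i$ be the $(k-1)$-cell whose characteristic map is $\sigma$ restricted to the face omitting $v_i$, and $e(c)=\sigma([v_0,v_1])$; $bl(c)=\ell(\sigma[v_0,v_1])\ell(\sigma[v_1,v_2])\ell(\sigma[v_0,v_2])^{-1}$ if $k=2$, and $bl(c)=\ell(c_k)\cdots\ell(c_1)\ell(e(c))\ell(c_0)\ell(e(c))^{-1}$ if $k\ge3$; $bl(\rho)$ for $\rho\in P$ is the boundary label of the cell of $B(X,P)$ labeled $\rho$. $M(X,P)$ is the inverse monoid presented by generators $X\cup P$ and relations $\rho^2=\rho$, $\rho=\rho\,bl(\rho)$ for $\rho\in P$. Natural partial order: $a\le b$ iff $a=eb$ for an idempotent $e$. *)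

(* Defs.v *)
From mathcomp Require Import all_boot.
Set Implicit Arguments. Unset Strict Implicit. Unset Printing Implicit Defensive.

(* Delta-complexes, combinatorially: a Delta-complex is determined by  *)
(* its cells in each dimension and the face operators                  *)
(*   face m i : (m+1)-cells -> m-cells,                                *)
(* where face m i c is the cell whose characteristic map is sigma_c    *)
(* restricted to the face omitting v_i (0 <= i <= m+1).                *)
Record dcx := DCx {
  cell : nat -> Type;
  face : forall m : nat, nat -> cell m.+1 -> cell m
}.
Arguments cell d m : clear implicits.
Arguments face d {m} _ _.

Definition is_dcomplex (K : dcx) : Prop :=
  forall (m i j : nat) (c : cell K m.+2), i < j <= m.+2 ->
    face K i (face K j c) = face K j.-1 (face K i c).

(* vertex j (= sigma_c(v_j)) of a k-cell c, 0 <= j <= k *)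
Fixpoint vert (K : dcx) (k : nat) : cell K k -> nat -> cell K 0 :=
  match k return cell K k -> nat -> cell K 0 with
  | 0 => fun c _ => c
  | k'.+1 => fun c j =>
      if j < k'.+1 then vert (face K k'.+1 c) j
      else vert (face K 0 c) j.-1
  end.

(* Iterated faces: delete the vertices with the given indices, listed in
   decreasing order, so that earlier deletions do not shift later ones. *)
Fixpoint dels (K : dcx) (ds : seq nat) (k : nat) : cell K k -> {m : nat & cell K m} :=
  match ds with
  | [::] => fun c => existT _ k c
  | i :: ds' =>
      match k return cell K k -> {m : nat & cell K m} with
      | 0 => fun c => existT _ 0 c
      | k'.+1 => fun c => dels ds' (face K i c)
      end
  end.

(* sigma_c restricted to the face of Delta^k spanned by the vertex set S
   (S a strictly increasing list of indices in {0..k}). *)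
Definition subface (K : dcx) (k : nat) (c : cell K k) (S : seq nat)
  : {m : nat & cell K m} :=
  dels [seq i <- rev (iota 0 k.+1) | i \notin S] c.

(* e(c) = sigma_c([v_0,v_1]) for a (k+1)-cell c *)
Fixpoint edge01 (K : dcx) (k : nat) : cell K k.+1 -> cell K 1 :=
  match k return cell K k.+1 -> cell K 1 with
  | 0 => fun c => c
  | k'.+1 => fun c => edge01 (face K k'.+2 c)
  end.

(* Generators X u P = cells of B of dimension >= 1                     *)
(* (X = 1-cells, P_k = k-cells); a generator is (m, g) with g an       *)
(* (m+1)-cell. A letter is a generator together with an inversion flag *)
(* (true = formal inverse).                                            *)
Definition gen (B : dcx) := {m : nat & cell B m.+1}.
Definition letter (B : dcx) := (gen B * bool)%type.
Definition word (B : dcx) := seq (letter B).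

Definition linv (B : dcx) (a : letter B) : letter B := (a.1, ~~ a.2).
Definition winv (B : dcx) (w : word B) : word B := rev (map (@linv B) w).

Definition lt1 (B : dcx) (e : cell B 1) (inv : bool) : letter B :=
  (existT (fun m => cell B m.+1) 0 e, inv).

Definition bl (B : dcx) (m : nat) : cell B m.+2 -> word B :=
  match m return cell B m.+2 -> word B with
  | 0 => fun r =>
      [:: lt1 (face B 2 r) false; lt1 (face B 0 r) false; lt1 (face B 1 r) true]
  | m'.+1 => fun r =>
      [seq (existT (fun j => cell B j.+1) m'.+1 (face B i r), false)
         | i <- rev (iota 1 m'.+3)]
      ++ [:: lt1 (edge01 r) false;
             (existT (fun j => cell B j.+1) m'.+1 (face B 0 r), false);
             lt1 (edge01 r) true]
  end.

Definition ltP (B : dcx) (m : nat) (r : cell B m.+2) : letter B :=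
  (existT (fun j => cell B j.+1) m.+1 r, false).

(* defining relations: Wagner congruence (free inverse monoid) plus
   rho^2 = rho and rho = rho bl(rho) for rho in P *)
Inductive rstep (B : dcx) : word B -> word B -> Prop :=
| RW1 (w : word B) : rstep (w ++ winv w ++ w) w
| RW2 (w z : word B) :
    rstep (w ++ winv w ++ z ++ winv z) (z ++ winv z ++ w ++ winv w)
| RPidem (m : nat) (r : cell B m.+2) : rstep [:: ltP r; ltP r] [:: ltP r]
| RPbl (m : nat) (r : cell B m.+2) : rstep [:: ltP r] (ltP r :: bl r).

Inductive eqM (B : dcx) : word B -> word B -> Prop :=
| eqM_refl u : eqM u u
| eqM_sym u v : eqM u v -> eqM v u
| eqM_trans u v w : eqM u v -> eqM v w -> eqM u w
| eqM_step x u v y : rstep u v -> eqM (x ++ u ++ y) (x ++ v ++ y).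

Definition leM (B : dcx) (a b : word B) : Prop :=
  exists e : word B, eqM (e ++ e) e /\ eqM a (e ++ b).

Definition is_BXP (B : dcx) (n : nat) : Prop :=
  [/\ is_dcomplex B,
      exists v : cell B 0, forall w : cell B 0, w = v
    & forall m, n < m -> cell B m -> False].

(* f : C -> B commutes with characteristic maps (dimension preserving,
   commutes with faces) and is an immersion (locally injective: injective
   on the corners (c, j) at each vertex). *)
Definition is_labeling (C B : dcx) (f : forall m, cell C m -> cell B m) : Prop :=
  (forall m i (c : cell C m.+1), i <= m.+1 -> f m (face C i c) = face B i (f m.+1 c))
  /\ (forall m (c c' : cell C m.+1) j, j <= m.+1 ->
        vert c j = vert c' j -> f m.+1 c = f m.+1 c' -> c = c').

Definition cellword (C B : dcx) (f : forall m, cell C m -> cell B m)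
  (d : {m : nat & cell C m}) (inv : bool) : word B :=
  match d with
  | existT 0 _ => [::]
  | existT m'.+1 x => [:: (existT (fun j => cell B j.+1) m' (f m'.+1 x), inv)]
  end.

(* An item is (S, b): S the increasing vertex list of a proper face of *)
(* Delta^k of dimension >= 1; b = true means the formal inverse of the *)
(* 1-cell S (only allowed when S is an edge).                          *)
Definition bitem := (seq nat * bool)%type.

Definition valid_bitem (k : nat) (x : bitem) : bool :=
  [&& sorted ltn x.1, all (fun i => i <= k) x.1,
      2 <= size x.1, size x.1 <= k & x.2 ==> (size x.1 == 2)].

(* alpha and omega (for cells of dimension >= 2, omega = alpha = root) *)
Definition balpha (x : bitem) : nat :=
  if x.2 then nth 0 x.1 1 else head 0 x.1.
Definition bomega (x : bitem) : nat :=
  if size x.1 == 2 then (if x.2 then head 0 x.1 else nth 0 x.1 1) else head 0 x.1.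

Definition closed_bpath (k : nat) (q : seq bitem) : Prop :=
  all (valid_bitem k) q /\
  (forall i, i.+1 < size q ->
     bomega (nth ([::], false) q i) = balpha (nth ([::], false) q i.+1)) /\
  (q != [::] -> balpha (head ([::], false) q) = 0 /\
                bomega (last ([::], false) q) = 0).

Definition image_word (C B : dcx) (f : forall m, cell C m -> cell B m)
  (k : nat) (c : cell C k) (q : seq bitem) : word B :=
  flatten [seq cellword f (subface c x.1) x.2 | x <- q].

(* Main.v *)
From Stdlib Require Import Setoid Morphisms.
Require Import Defs.
From mathcomp Require Import all_boot zify.
Set Implicit Arguments. Unset Strict Implicit. Unset Printing Implicit Defensive.

Lemma eqM_ctx (B : dcx) (x u v y : word B) : eqM u v -> eqM (x ++ u ++ y) (x ++ v ++ y).
Proof.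
elim=> {u v}.
- by move=> u; apply: eqM_refl.
- by move=> u v _ H; apply: eqM_sym.
- by move=> u v w _ H1 _ H2; apply: eqM_trans H2.
- move=> x0 u v y0 H. have := eqM_step (x ++ x0) (y0 ++ y) H. by rewrite -!catA.
Qed.
Add Parametric Relation (B : dcx) : (word B) (@eqM B)
  reflexivity proved by (@eqM_refl B)
  symmetry proved by (@eqM_sym B)
  transitivity proved by (@eqM_trans B) as eqM_rel.
Add Parametric Morphism (B : dcx) : (@cat (letter B)) with signature (@eqM B) ==> (@eqM B) ==> (@eqM B) as cat_mor.
Proof.
move=> u u' Hu v v' Hv.
apply: (@eqM_trans _ _ (u' ++ v)).
  by have := eqM_ctx [::] v Hu.
by have := eqM_ctx u' [::] Hv; rewrite !cats0.
Qed.

#[export] Hint Resolve eqM_refl : core.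
Section IM.
Variable B : dcx.
Implicit Types u v w x y z t : word B.
Local Notation "a =M b" := (@eqM B a b) (at level 70).

Lemma winv_cat u v : winv (u ++ v) = winv v ++ winv u.
Proof. by rewrite /winv map_cat rev_cat. Qed.
Lemma winvK w : winv (winv w) = w.
Proof. rewrite /winv map_rev revK -map_comp. elim: w => //= [[a b] w IH]. by rewrite IH /linv /= negbK. Qed.
Lemma winv_nil : winv [::] = [::] :> word B. Proof. by []. Qed.

Lemma rstM u v : rstep u v -> u =M v.
Proof. move=> H; have := eqM_step [::] [::] H; by rewrite /= !cats0. Qed.

Lemma tl u v t : u =M v -> u ++ t =M v ++ t.
Proof. move=> H; rewrite H; reflexivity. Qed.

Lemma t0 u v : (forall t, u ++ t =M v ++ t) -> u =M v.
Proof. move=> H; have := H [::]; by rewrite !cats0. Qed.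

Lemma W1 w t : w ++ winv w ++ w ++ t =M w ++ t.
Proof. have := tl t (rstM (RW1 w)); by rewrite -!catA. Qed.
Lemma W1i w t : winv w ++ w ++ winv w ++ t =M winv w ++ t.
Proof. have := W1 (winv w) t; by rewrite winvK. Qed.
Lemma W2 w z t : w ++ winv w ++ z ++ winv z ++ t =M z ++ winv z ++ w ++ winv w ++ t.
Proof. have := tl t (rstM (RW2 w z)); by rewrite -!catA. Qed.

Lemma W10 w : w ++ winv w ++ w =M w.
Proof. have := W1 w [::]; by rewrite !cats0. Qed.
Lemma W1i0 w : winv w ++ w ++ winv w =M winv w.
Proof. have := W1i w [::]; by rewrite !cats0. Qed.

Lemma inv_uniq u v x y : u =M v ->
  (forall t, x ++ u ++ x ++ t =M x ++ t) -> (forall t, u ++ x ++ u ++ t =M u ++ t) ->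
  (forall t, y ++ v ++ y ++ t =M y ++ t) -> (forall t, v ++ y ++ v ++ t =M v ++ t) ->
  (forall t, x ++ u ++ y ++ v ++ t =M y ++ v ++ x ++ u ++ t) ->
  (forall t, v ++ y ++ u ++ x ++ t =M u ++ x ++ v ++ y ++ t) -> x =M y.
Proof.
move=> huv hx hu hy hv c1 c2.
have hyu : forall t, u ++ y ++ u ++ t =M u ++ t.
  move=> t; rewrite huv; exact: hv.
have e1 : x =M y ++ v ++ x.
  transitivity (x ++ u ++ x); first by symmetry; apply: t0 => t; rewrite -!catA.
  transitivity (x ++ u ++ y ++ u ++ x); first by rewrite hyu.
  transitivity (x ++ u ++ y ++ v ++ x); first by rewrite {2}huv.
  rewrite c1. have h := hx [::]; rewrite !cats0 in h. by rewrite h.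
rewrite e1.
have hv0 := hv [::]; rewrite !cats0 in hv0.
have hu0 := hu [::]; rewrite !cats0 in hu0.
have hy0 := hy [::]; rewrite !cats0 in hy0.
have c20 := c2 [::]; rewrite !cats0 in c20.
transitivity (y ++ v ++ y ++ v ++ x); first by rewrite hv.
transitivity (y ++ v ++ y ++ u ++ x); first by rewrite -{2}huv.
rewrite c20.
transitivity (y ++ u ++ x ++ u ++ y); first by rewrite -huv.
by rewrite hu huv hy0.
Qed.

Lemma winv_eqM u v : u =M v -> winv u =M winv v.
Proof.
move=> huv; apply: (inv_uniq huv).
- by move=> t; apply: W1i.
- by move=> t; apply: W1.
- by move=> t; apply: W1i.
- by move=> t; apply: W1.
- move=> t; have := W2 (winv u) (winv v) t; by rewrite !winvK.
- move=> t; exact: W2.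
Qed.
End IM.

Add Parametric Morphism (B : dcx) : (@winv B) with signature (@eqM B) ==> (@eqM B) as winv_mor.
Proof. exact: winv_eqM. Qed.

Section IM2.
Variable B : dcx.
Implicit Types u v w x y z t g h r : word B.
Local Notation "a =M b" := (@eqM B a b) (at level 70).

Definition Iw u := u =M u ++ winv u.
Definition ab h w := h ++ w =M h.

Lemma I_ww w : Iw (w ++ winv w).
Proof. rewrite /Iw winv_cat winvK -!catA W1; reflexivity. Qed.

Lemma I_comm u v t : Iw u -> Iw v -> u ++ v ++ t =M v ++ u ++ t.
Proof. move=> hu hv; rewrite hu hv -!catA; exact: W2. Qed.

Lemma I_comm0 u v : Iw u -> Iw v -> u ++ v =M v ++ u.
Proof. move=> hu hv; have := I_comm [::] hu hv; by rewrite !cats0. Qed.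

Lemma I_idem u t : Iw u -> u ++ u ++ t =M u ++ t.
Proof. move=> hu; rewrite hu -!catA W1; reflexivity. Qed.

Lemma I_idem0 u : Iw u -> u ++ u =M u.
Proof. move=> hu; have := I_idem [::] hu; by rewrite !cats0. Qed.

Lemma I_inv u : Iw u -> winv u =M u.
Proof. move=> hu; rewrite {1}hu winv_cat winvK; symmetry; exact: hu. Qed.

Lemma I_cat u v : Iw u -> Iw v -> Iw (u ++ v).
Proof.
move=> hu hv; rewrite /Iw winv_cat (I_inv hu) (I_inv hv) -!catA.
rewrite (I_idem u hv) (I_comm0 hv hu) (I_idem v hu); reflexivity.
Qed.

Lemma I_conj g u : Iw u -> Iw (g ++ u ++ winv g).
Proof.
move=> hu; rewrite /Iw !winv_cat winvK (I_inv hu) -!catA.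
have hg := I_ww (winv g); rewrite winvK in hg.
have := I_comm (u ++ winv g) hu hg; rewrite -!catA => ->.
rewrite (I_idem _ hu) W1; reflexivity.
Qed.


Lemma idem_I u : u ++ u =M u -> Iw u.
Proof.
move=> hu.
have a : winv u =M (u ++ winv u) ++ (winv u ++ u).
  transitivity (winv u ++ u ++ winv u); first by rewrite W1i0.
  transitivity (winv u ++ (u ++ u) ++ winv u); first by rewrite hu.
  rewrite -!catA.
  have := I_comm0 (I_ww (winv u)) (I_ww u); rewrite winvK -!catA => ->.
  reflexivity.
have Ifg : Iw ((u ++ winv u) ++ (winv u ++ u)).
  apply: I_cat; first exact: I_ww.
  have := I_ww (winv u); by rewrite winvK.
have b : winv u ++ winv u =M winv u.
  by rewrite a I_idem0.
rewrite /Iw; symmetry.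
transitivity (u ++ ((u ++ winv u) ++ (winv u ++ u))); first by rewrite -a.
transitivity ((u ++ u) ++ (winv u ++ winv u) ++ u); first by rewrite -!catA.
rewrite hu b W10; reflexivity.
Qed.
End IM2.

Section IM3.
Variable B : dcx.
Implicit Types u v w x y z t g h r : word B.
Local Notation "a =M b" := (@eqM B a b) (at level 70).

Lemma Iwi g : Iw (winv g ++ g).
Proof. have := I_ww (winv g); by rewrite winvK. Qed.

Lemma ab_cat h u v : ab h u -> ab h v -> ab h (u ++ v).
Proof. rewrite /ab => hu hv; by rewrite catA hu hv. Qed.

Lemma ab_split h u v : ab h (u ++ v) -> Iw u -> Iw v -> ab h u /\ ab h v.
Proof.
rewrite /ab => H hu hv; split.
  transitivity ((h ++ u ++ v) ++ u); first by rewrite H.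
  by rewrite -!catA (I_comm0 hv hu) (I_idem _ hu) H.
transitivity ((h ++ u ++ v) ++ v); first by rewrite H.
by rewrite -!catA (I_idem0 hv) H.
Qed.

Lemma I_flatten (F : nat -> word B) s : (forall i, Iw (F i)) -> Iw (flatten [seq F i | i <- s]).
Proof.
move=> hF; elim: s => [|i s IH] /=; first by rewrite /Iw.
exact: I_cat.
Qed.

Lemma ab_flatten h (F : nat -> word B) s z i : ab h (flatten [seq F i | i <- s] ++ z) ->
  (forall i, Iw (F i)) -> Iw z -> i \in s -> ab h (F i).
Proof.
move=> H hF hz; elim: s H => [|j s IH] //= H.
rewrite in_cons; case/orP => [/eqP ->|his].
  rewrite -catA in H; have [] := ab_split H (hF j) _ => //.
  apply: I_cat => //; exact: I_flatten.
apply: IH => //.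
rewrite -catA in H; have [] := ab_split H (hF j) _ => //.
apply: I_cat => //; exact: I_flatten.
Qed.

Lemma ab_tt r t : Iw r -> ab r t -> ab r (t ++ winv t).
Proof.
rewrite /ab => hr H; symmetry.
transitivity (r ++ winv r); first exact: hr.
transitivity ((r ++ t) ++ winv (r ++ t)); first by rewrite H.
rewrite winv_cat (I_inv hr) -!catA.
have := I_comm0 (I_ww t) hr; rewrite -!catA => ->.
by rewrite (I_idem _ hr).
Qed.

Lemma ab_inv r t : Iw r -> ab r t -> ab r (winv t).
Proof.
move=> hr H; rewrite /ab.
transitivity ((r ++ t) ++ winv t); first by rewrite H.
rewrite -catA; exact: ab_tt.
Qed.

Lemma ab_gu r g u : Iw r -> ab r (g ++ u) -> ab r (g ++ winv g).
Proof.
move=> hr H; have H2 := ab_tt hr H; rewrite /ab in H2 *.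
transitivity ((r ++ (g ++ u) ++ winv (g ++ u)) ++ g ++ winv g); first by rewrite H2.
rewrite winv_cat -!catA W1i0.
rewrite winv_cat -!catA in H2; exact: H2.
Qed.

Lemma ab_conj h g u : Iw u -> ab h (g ++ u ++ winv g) -> h ++ g ++ u =M h ++ g.
Proof.
move=> hu H; rewrite /ab in H; symmetry.
transitivity ((h ++ g ++ u ++ winv g) ++ g); first by rewrite H.
rewrite -!catA.
have := I_comm0 hu (Iwi g); rewrite -!catA => ->.
by rewrite W1.
Qed.

Lemma edgeL r y g : Iw r -> ab r (y ++ winv g) -> r ++ y =M r ++ g.
Proof.
move=> hr H.
transitivity ((r ++ y ++ winv g) ++ g); last by rewrite H.
have H2 := ab_tt hr H; rewrite /ab winv_cat winvK -!catA in H2.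
transitivity ((r ++ y ++ winv g ++ g ++ winv y) ++ y); first by rewrite H2.
have := I_comm0 (Iwi g) (Iwi y); rewrite -!catA => ->. rewrite W1; reflexivity.
Qed.
End IM3.

Section Comb.
Variable D : dcx.
Hypothesis hD : is_dcomplex D.
Definition sc := {m : nat & cell D m}.
Definition sface (i : nat) (s : sc) : sc :=
  match s with existT 0 c => existT _ 0 c | existT m.+1 c => existT _ m (face D i c) end.
Definition sdels (ds : seq nat) (s : sc) := foldl (fun s i => sface i s) s ds.

Lemma sdels0 ds (c : cell D 0) : sdels ds (existT _ 0 c) = existT _ 0 c.
Proof. by elim: ds. Qed.

Lemma dels_sdels ds k (c : cell D k) : dels ds c = sdels ds (existT _ k c).
Proof.
elim: ds k c => [|i ds IH] [|k] c //=.
symmetry; exact: sdels0.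
Qed.

Lemma sface_dim i s : projT1 (sface i s) = projT1 s - 1.
Proof. case: s => [[|m] c] /=; lia. Qed.

Lemma sdels_dim ds s : projT1 (sdels ds s) = projT1 s - size ds.
Proof.
elim: ds s => [|i ds IH] s /=; first by rewrite subn0.
rewrite IH sface_dim; lia.
Qed.

Lemma sface_sface s i j : i < j -> j <= projT1 s -> 2 <= projT1 s ->
  sface i (sface j s) = sface j.-1 (sface i s).
Proof.
case: s => [[|[|m]] c] //= hij hj _.
by rewrite hD // hij.
Qed.

Lemma comm_lo lo t s : sorted gtn lo -> all (fun x => x < t) lo ->
  t <= projT1 s -> size lo + 2 <= projT1 s ->
  sdels lo (sface t s) = sface (t - size lo) (sdels lo s).
Proof.
elim: lo t s => [|d lo IH] t s /=; first by rewrite subn0.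
move=> hs /andP [hdt hall] ht hsz.
rewrite sface_sface //; last by lia.
have hlo : all (fun x => x < t.-1) lo.
  have := order_path_min (leT := gtn) _ hs.
  have tr : transitive gtn by move=> a b c /= h1 h2; lia.
  move/(_ tr) => H; apply/allP => x hx; have := allP H x hx => /=; lia.
rewrite IH //.
- congr sface; lia.
- exact: path_sorted hs.
- rewrite sface_dim; lia.
- rewrite sface_dim; lia.
Qed.

Lemma cnt_iota (S : seq nat) n : uniq S -> count (fun x => x \in S) (iota 0 n) = count (fun x => x < n) S.
Proof.
move=> uS; rewrite -!size_filter; apply: perm_size; apply: uniq_perm.
- exact: filter_uniq (iota_uniq 0 n).
- exact: filter_uniq.
- move=> x; rewrite !mem_filter mem_iota /=; by case: (x \in S); case: (x < n).
Qed.

Variable K : nat.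
Variable r : cell D K.
Definition compS (S : seq nat) := [seq i <- rev (iota 0 K.+1) | i \notin S].
Definition sub (S : seq nat) : sc := sdels (compS S) (existT _ K r).

Lemma sub_dim S : sorted ltn S -> all (fun x => x <= K) S -> projT1 (sub S) = (size S).-1.
Proof.
move=> sS aS; rewrite sdels_dim /= /compS size_filter count_rev.
have uS : uniq S by move: sS; rewrite ltn_sorted_uniq_leq => /andP[].
have := count_predC (fun x => x \in S) (iota 0 K.+1).
rewrite cnt_iota // size_iota.
have -> : count (fun x => x < K.+1) S = size S.
  rewrite -[RHS](count_predT S); apply: eq_in_count => x hx /=; by have := allP aS x hx.
move=> h.
have e : count (fun i => i \notin S) (iota 0 K.+1) = count [predC S] (iota 0 K.+1) by apply: eq_count.
rewrite e; lia.
Qed.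


Lemma comp_size S : sorted ltn S -> all (fun x => x <= K) S -> size (compS S) + size S = K.+1.
Proof.
move=> sS aS; rewrite /compS size_filter count_rev.
have uS : uniq S by move: sS; rewrite ltn_sorted_uniq_leq => /andP[].
have := count_predC (fun x => x \in S) (iota 0 K.+1).
rewrite cnt_iota // size_iota.
have -> : count (fun x => x < K.+1) S = size S.
  rewrite -[RHS](count_predT S); apply: eq_in_count => x hx /=; by have := allP aS x hx.
have e : count (fun i => i \notin S) (iota 0 K.+1) = count [predC S] (iota 0 K.+1) by apply: eq_count.
rewrite e; lia.
Qed.

Lemma sub_face S t : sorted ltn S -> all (fun x => x <= K) S -> t \in S -> 3 <= size S ->
  sface (count (fun x => x < t) S) (sub S) = sub [seq x <- S | x != t].
Proof.
move=> sS aS tS s3.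
have uS : uniq S by move: sS; rewrite ltn_sorted_uniq_leq => /andP[].
have tK : t <= K by exact: (allP aS).
have hsplit : rev (iota 0 K.+1) = rev (iota t.+1 (K - t)) ++ t :: rev (iota 0 t).
  have -> : K.+1 = t + (K - t).+1 by lia.
  by rewrite iotaD add0n /= rev_cat rev_cons cat_rcons.
set hi := [seq i <- rev (iota t.+1 (K - t)) | i \notin S].
set lo := [seq i <- rev (iota 0 t) | i \notin S].
have c1 : compS S = hi ++ lo by rewrite /compS hsplit filter_cat /= tS.
have c2 : compS [seq x <- S | x != t] = hi ++ t :: lo.
  rewrite /compS hsplit filter_cat /= mem_filter eqxx /=; congr (_ ++ _ :: _).
  - apply: eq_in_filter => x; rewrite mem_rev mem_iota mem_filter => hx.
    have -> : (x != t) = true by apply/eqP => ext; subst; lia.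
    by [].
  - apply: eq_in_filter => x; rewrite mem_rev mem_iota mem_filter => hx.
    have -> : (x != t) = true by apply/eqP => ext; subst; lia.
    by [].
have hcs := comp_size sS aS.
have shi : size hi <= K - t by rewrite /hi size_filter; apply: leq_trans (count_size _ _) _; rewrite size_rev size_iota.
have slo : size lo = t - count (fun x => x < t) S.
  rewrite /lo size_filter count_rev -(cnt_iota _ uS).
  have := count_predC (fun x => x \in S) (iota 0 t); rewrite size_iota.
  have e : count (fun i => i \notin S) (iota 0 t) = count [predC S] (iota 0 t) by apply: eq_count.
  rewrite e; lia.
have cle : count (fun x => x < t) S <= t.
  rewrite -(cnt_iota _ uS); apply: leq_trans (count_size _ _) _; by rewrite size_iota.
rewrite /sub c1 c2 /sdels !foldl_cat /=.
rewrite -/(sdels lo _) -/(sdels lo _) -/(sdels hi _).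
rewrite comm_lo.
- congr sface; by rewrite slo subKn.
- apply: sorted_filter; first by move=> a b c /= h1 h2; lia.
  rewrite rev_sorted; exact: iota_ltn_sorted.
- apply/allP => x; rewrite mem_filter mem_rev mem_iota; case/andP => _ /=; lia.
- rewrite sdels_dim /=; move: shi tK; clear; move: (size hi) => a; lia.
- rewrite sdels_dim /=; rewrite c1 size_cat in hcs; move: hcs s3; clear; move: (size hi) (size lo) (size S) => a b c; lia.
Qed.
End Comb.

Definition bw (B : dcx) (s : {m : nat & cell B m}) (b : bool) : word B :=
  match s with existT 0 _ => [::] | existT m.+1 x => [:: (existT (fun j => cell B j.+1) m x, b)] end.

Definition sf (C B : dcx) (f : forall m, cell C m -> cell B m) (d : {m : nat & cell C m}) : {m : nat & cell B m} :=
  existT _ (projT1 d) (f _ (projT2 d)).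

Lemma cellword_bw C B (f : forall m, cell C m -> cell B m) d b : cellword f d b = bw (sf f d) b.
Proof. by case: d => [[|m] x]. Qed.

Lemma sf_dels C B (f : forall m, cell C m -> cell B m) : is_labeling f ->
  forall ds k (c : cell C k), sorted gtn ds -> all (fun d => d <= k) ds ->
  sf f (dels ds c) = dels ds (f k c).
Proof.
move=> [hf _]; elim=> [|d ds IH] [|k] c //= hs /andP [hd hall].
rewrite -hf //; apply: IH; first exact: path_sorted hs.
have tr : transitive gtn by move=> a b e /= h1 h2; lia.
have := order_path_min tr hs => H; apply/allP => x hx; have := allP H x hx => /=; lia.
Qed.

Lemma comp_sorted K (S : seq nat) : sorted gtn [seq i <- rev (iota 0 K.+1) | i \notin S].
Proof.
apply: sorted_filter; first by move=> a b c /= h1 h2; lia.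
rewrite rev_sorted; exact: iota_ltn_sorted.
Qed.

Lemma comp_all K (S : seq nat) : all (fun d => d <= K) [seq i <- rev (iota 0 K.+1) | i \notin S].
Proof.
apply/allP => x; rewrite mem_filter mem_rev mem_iota; case/andP => _; rewrite add0n ltnS; by case/andP.
Qed.

Lemma image_word_sub C B (f : forall m, cell C m -> cell B m) (hf : is_labeling f) k (c : cell C k) q :
  image_word f c q = flatten [seq bw (sub (f k c) x.1) x.2 | x <- q].
Proof.
rewrite /image_word; congr flatten; apply: eq_map => x.
rewrite cellword_bw /subface sf_dels //; last exact: comp_all; last exact: comp_sorted.
by rewrite dels_sdels.
Qed.

Lemma iota2S n : iota 2 n.+1 = iota 2 n ++ [:: n.+2].
Proof. have := iotaD 2 n 1; rewrite addn1 add2n; by []. Qed.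

Section Main.
Variable B : dcx.
Hypothesis hB : is_dcomplex B.
Local Notation "a =M b" := (@eqM B a b) (at level 70).
Implicit Types u v w h : word B.

Lemma Iw_letter m (x : cell B m.+2) : Iw [:: Defs.ltP x].
Proof. apply: idem_I; exact: (rstM (RPidem x)). Qed.

Lemma ab_rel h u w : ab h u -> u =M u ++ w -> ab h w.
Proof.
rewrite /ab => H1 H2.
transitivity ((h ++ u) ++ w); first by rewrite H1.
by rewrite -catA -H2.
Qed.

Lemma ab_bl h m (x : cell B m.+2) : ab h [:: Defs.ltP x] -> ab h (bl x).
Proof. move=> H; apply: ab_rel H _; exact: (rstM (RPbl x)). Qed.

Lemma flatten_map1 (T : Type) (a : nat -> T) s : flatten [seq [:: a i] | i <- s] = [seq a i | i <- s].
Proof. by elim: s => //= i s ->. Qed.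

Lemma Iw_map (a : nat -> letter B) s : (forall i, Iw [:: a i]) -> Iw [seq a i | i <- s].
Proof. move=> H; rewrite -flatten_map1; exact: I_flatten. Qed.

Lemma winv1 (a : letter B) : winv [:: a] = [:: linv a].
Proof. by []. Qed.

Lemma Iw_tail m (x : cell B m.+3) :
  Iw [:: lt1 (edge01 x) false; (existT (fun j => cell B j.+1) m.+1 (face B 0 x), false);
         lt1 (edge01 x) true].
Proof.
have := I_conj [:: lt1 (edge01 x) false] (Iw_letter (face B 0 x)).
by rewrite winv1.
Qed.

Lemma bl_split m (x : cell B m.+3) : bl x =
  [seq (existT (fun j => cell B j.+1) m.+1 (face B i x), false) | i <- rev (iota 1 m.+3)] ++
  [:: lt1 (edge01 x) false; (existT (fun j => cell B j.+1) m.+1 (face B 0 x), false);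
         lt1 (edge01 x) true].
Proof. by []. Qed.

Lemma step_face h m (x : cell B m.+3) d : ab h (bw (existT _ m.+3 x) false) ->
  0 < d <= m.+3 -> ab h (bw (sface d (existT _ m.+3 x)) false).
Proof.
move=> H hd; have Hb := ab_bl H; rewrite bl_split -flatten_map1 in Hb.
apply: (ab_flatten Hb); last by rewrite mem_rev mem_iota; lia.
- move=> i; exact: Iw_letter.
- exact: Iw_tail.
Qed.

Lemma A0gen h ds (y : sc B) : sorted gtn ds -> all (fun d => 0 < d <= projT1 y) ds ->
  size ds + 2 <= projT1 y -> ab h (bw y false) -> ab h (bw (sdels ds y) false).
Proof.
elim: ds y => [|d ds IH] y //= hs /andP [hd hall] hsz H.
case: y hd hall hsz H => [[|[|[|m]]] x] //= hd hall hsz H; try lia.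
apply: IH.
- exact: path_sorted hs.
- have tr : transitive gtn by move=> a b e /= h1 h2; lia.
  have := order_path_min tr hs => H1; apply/allP => z hz; have := allP H1 z hz.
  have := allP hall z hz => /=; lia.
- simpl; lia.
- exact: step_face.
Qed.

Variable k : nat.
Variable r : cell B k.+2.
Local Notation K := k.+2.
Definition rho : word B := [:: (existT (fun j => cell B j.+1) k.+1 r, false)].
Definition L (S : seq nat) := bw (sub r S) false.

Lemma Iw_rho : Iw rho.
Proof. exact: (Iw_letter r). Qed.

Lemma A0 S : sorted ltn S -> all (fun x => x <= K) S -> 0 \in S -> 3 <= size S -> ab rho (L S).
Proof.
move=> sS aS h0 s3; rewrite /L /sub.
have hcs := comp_size sS aS.
apply: A0gen => /=.
- exact: comp_sorted.
- apply/allP => x; rewrite mem_filter mem_rev mem_iota; case/andP => hx; rewrite add0n ltnS => /andP[_ ->].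
  rewrite andbT lt0n; apply/eqP => ex; subst; by rewrite h0 in hx.
- move: hcs s3; move: (size (compS k.+2 S)) (size S) => a b; lia.
- rewrite /ab; exact: (rstM (RPidem r)).
Qed.

Definition g (a : nat) : word B := if a == 0 then [::] else L [:: 0; a].

Lemma sub_cell S m : sorted ltn S -> all (fun x => x <= K) S -> size S = m.+3 ->
  {x : cell B m.+2 | sub r S = existT _ m.+2 x}.
Proof.
move=> sS aS hs; case E: (sub r S) => [n x].
have := sub_dim r sS aS; rewrite E hs /= => hn; subst n; by exists x.
Qed.

Lemma tri i j : 0 < i -> i < j -> j <= K -> ab rho (g i ++ L [:: i; j] ++ winv (g j)).
Proof.
move=> hi hij hj.
have sS : sorted ltn [:: 0; i; j] by rewrite /= hi hij.
have aS : all (fun x => x <= K) [:: 0; i; j] by rewrite /= hj (leq_trans (ltnW hij) hj).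
have [x E] := sub_cell (m := 0) sS aS erefl.
have H := A0 sS aS (mem_head _ _) (leqnn 3).
rewrite /L E in H; have H2 := ab_bl H.
have e2 : sface 2 (sub r [:: 0; i; j]) = sub r [:: 0; i].
  have := sub_face hB r sS aS (t := j); rewrite !inE eqxx !orbT => /(_ isT isT).
  have -> : count (fun x => x < j) [:: 0; i; j] = 2 by rewrite /= ltnn hij (leq_ltn_trans _ hij).
  have n0j : (0 != j) by rewrite neq_ltn (leq_ltn_trans _ hij).
  have nij : (i != j) by rewrite neq_ltn hij.
  by rewrite /= n0j nij eqxx.
have e0 : sface 0 (sub r [:: 0; i; j]) = sub r [:: i; j].
  have := sub_face hB r sS aS (t := 0); rewrite !inE eqxx => /(_ isT isT).
  have ni0 : (i != 0) by rewrite neq_ltn hi orbT.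
  have nj0 : (j != 0) by rewrite neq_ltn (ltn_trans hi hij) orbT.
  by rewrite /= ni0 nj0 => He; exact: He.
have e1 : sface 1 (sub r [:: 0; i; j]) = sub r [:: 0; j].
  have := sub_face hB r sS aS (t := i); rewrite !inE eqxx orbT => /(_ isT isT).
  have -> : count (fun x => x < i) [:: 0; i; j] = 1.
    by rewrite /= ltnn hi ltnNge (ltnW hij).
  have n0i : (0 != i) by rewrite neq_ltn hi.
  have nji : (j != i) by rewrite neq_ltn hij orbT.
  by rewrite /= eqxx n0i nji.
rewrite E /= in e2 e0 e1.
have gi : g i = [:: lt1 (face B 2 x) false] by rewrite /g /L -e2; case: eqP => // h0; lia.
have gj : g j = [:: lt1 (face B 1 x) false] by rewrite /g /L -e1; case: eqP => // h0; lia.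
have lij : L [:: i; j] = [:: lt1 (face B 0 x) false] by rewrite /L -e0.
by rewrite gi gj lij winv1.
Qed.

Lemma edge i j : i < j -> j <= K -> rho ++ g i ++ L [:: i; j] =M rho ++ g j.
Proof.
move=> hij hj; case: (posnP i) => [->|hi].
  rewrite /g eqxx /=; have -> : (j == 0) = false by apply/eqP; lia.
  by [].
rewrite catA; apply: edgeL Iw_rho _; rewrite -catA; exact: tri.
Qed.

Lemma iedge i j : i < j -> j <= K -> rho ++ g j ++ winv (L [:: i; j]) =M rho ++ g i.
Proof.
move=> hij hj; case: (posnP i) => [e0|hi].
  subst i; have gj : g j = L [:: 0; j] by rewrite /g; case: eqP => // h0; lia.
  rewrite -gj (_ : g 0 = [::]) // cats0.
  have : ab rho (g j ++ winv (g j)).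
    case: (ltnP 1 j) => h1.
      have := ab_inv Iw_rho (tri (isT : 0 < 1) h1 hj); rewrite !winv_cat winvK -!catA => H.
      exact: ab_gu Iw_rho H.
    have ej : j = 1 by lia.
    subst j; have := tri (isT : 0 < 1) (isT : 1 < 2) (isT : 2 <= K) => H.
    exact: ab_gu Iw_rho H.
  by [].
have := ab_inv Iw_rho (tri hi hij hj); rewrite !winv_cat winvK -!catA => H.
rewrite catA; apply: edgeL Iw_rho _; by rewrite -catA.
Qed.

Lemma edge01_sdels n (x : cell B n.+1) : existT _ 1 (edge01 x) = sdels (rev (iota 2 n)) (existT _ n.+1 x).
Proof.
elim: n x => [|n IH] x; first by [].
rewrite iota2S.
rewrite rev_cat /=; exact: IH.
Qed.

Lemma take_sub n S : sorted ltn S -> all (fun x => x <= K) S -> size S = n.+2 ->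
  sdels (rev (iota 2 n)) (sub r S) = sub r (take 2 S).
Proof.
elim: n S => [|n IH] S sS aS hs.
  by rewrite /= take_oversize // hs.
case/lastP: S sS aS hs => [|S t] sS aS hs //.
rewrite size_rcons in hs; case: hs => hs.
have tr : transitive ltn by move=> a b c /= h1 h2; lia.
have sS' : sorted ltn S by move: sS; rewrite -cats1 => /cat_sorted2 [] .
have aS' : all (fun x => x <= K) S by move: aS; rewrite all_rcons => /andP[].
have lt : all (fun x => x < t) S.
  move: sS; rewrite -rev_sorted rev_rcons /= => /(order_path_min _) H.
  have tr' : transitive (fun x y : nat => y < x) by move=> a b c /= h1 h2; lia.
  have := H tr'; by rewrite all_rev.
rewrite iota2S.
rewrite rev_cat /=.
have := sub_face hB r sS aS (t := t); rewrite mem_rcons mem_head size_rcons hs => /(_ isT isT).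
have -> : count (fun x => x < t) (rcons S t) = n.+2.
  rewrite -cats1 count_cat /= ltnn !addn0 -hs -(count_predT S); apply: eq_in_count => y hy; exact: (allP lt).
have -> : [seq x <- rcons S t | x != t] = S.
  rewrite filter_rcons eqxx /=; apply/all_filterP; apply/allP => x hx.
  by have := allP lt x hx; rewrite neq_ltn => ->.
move=> ->; rewrite IH //.
by rewrite -cats1 takel_cat // hs.
Qed.

Lemma facec S : sorted ltn S -> all (fun x => x <= K) S -> 3 <= size S ->
  rho ++ g (head 0 S) ++ L S =M rho ++ g (head 0 S).
Proof.
case: S => [|a S] // sS aS hs /=.
case: (posnP a) => [ea|ha].
  subst a; rewrite /g eqxx /=.
  exact: (A0 sS aS (mem_head _ _) hs).
set S0 := [:: 0, a & S].
have sS0 : sorted ltn S0 by rewrite /S0 /= ha.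
have aS0 : all (fun x => x <= K) S0 by rewrite /S0 /=.
have [m hm] : exists m, size S = m.+2 by exists (size S).-2; simpl in hs; lia.
have hs0 : size S0 = m.+4 by rewrite /S0 /= hm.
have [x E] := sub_cell (m := m.+1) sS0 aS0 hs0.
have H := A0 sS0 aS0 (mem_head _ _) (ltac:(rewrite hs0; done) : 3 <= size S0).
rewrite /L E in H; have H2 := ab_bl H; rewrite bl_split in H2.
have [_ H3] := ab_split H2 (Iw_map _ (fun i => Iw_letter _)) (Iw_tail x).
have ga : g a = [:: lt1 (edge01 x) false].
  rewrite /g; case: eqP => [h0|_]; first lia.
  rewrite /L (_ : [:: 0; a] = take 2 S0).
  2: by rewrite /S0 /= take0.
  transitivity (bw (sdels (rev (iota 2 m.+2)) (sub r S0)) false); first by rewrite (take_sub sS0 aS0 hs0).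
  by rewrite E -edge01_sdels.
have lS : L (a :: S) = [:: (existT (fun j => cell B j.+1) m.+1 (face B 0 x), false)].
  have hc : count (fun x => x < 0) S0 = 0.
    rewrite (eq_count (a2 := pred0)) ?count_pred0 // => y; by rewrite ltn0.
  have hf : [seq x <- S0 | x != 0] = a :: S.
    rewrite /S0 /=; have ha0 : a != 0 by rewrite neq_ltn ha orbT.
    rewrite ha0; congr (_ :: _); apply/all_filterP; apply/allP => y hy.
    have tr : transitive ltn by move=> a' b c /= h1 h2; lia.
    have := allP (order_path_min tr sS0) y; rewrite inE hy orbT => /(_ isT).
    move=> hy0; rewrite neq_ltn; apply/orP; right; exact: hy0.
  have := sub_face hB r sS0 aS0 (t := 0) (mem_head _ _) (ltac:(rewrite hs0; done) : 3 <= size S0).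
  rewrite hc hf E => He.
  transitivity (bw (sface 0 (existT _ m.+3 x)) false); last by [].
  by rewrite He.
rewrite ga lS.
have := ab_conj (h := rho) (g := [:: lt1 (edge01 x) false]) (Iw_letter (face B 0 x)).
rewrite winv1 => /(_ H3) He; exact: He.
Qed.

Lemma bw_true (s : sc B) : bw s true = winv (bw s false).
Proof. by case: s => [[|m] c]. Qed.

Lemma item x : valid_bitem K x -> rho ++ g (balpha x) ++ bw (sub r x.1) x.2 =M rho ++ g (bomega x).
Proof.
case: x => S b; rewrite /valid_bitem /balpha /bomega /= => /and5P [sS aS s2 sK hb].
case: S sS aS s2 sK hb => [|i [|j S]] // sS aS s2 sK hb.
case: S sS aS s2 sK hb => [|l S] sS aS s2 sK hb.
  have hij : i < j by move: sS => /= /andP [].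
  have hj : j <= K by move: aS => /= /and3P [].
  case: b hb => _ /=.
    rewrite bw_true; exact: iedge.
  exact: edge.
have hb' : b = false by case: b hb.
subst b; rewrite /=.
have := facec sS aS (ltac:(by []) : 3 <= size [:: i, j, l & S]); by [].
Qed.

Definition W (q : seq bitem) := flatten [seq bw (sub r x.1) x.2 | x <- q].

Lemma chain q a : all (valid_bitem K) q ->
  (forall i, i.+1 < size q -> bomega (nth ([::], false) q i) = balpha (nth ([::], false) q i.+1)) ->
  (q != [::] -> balpha (head ([::], false) q) = a) ->
  rho ++ g a ++ W q =M rho ++ g (last a [seq bomega x | x <- q]).
Proof.
elim: q a => [|x q IH] a /=; first by rewrite cats0.
move=> /andP [hx hq] hp ha; have {}ha := ha isT; subst a.
transitivity ((rho ++ g (balpha x) ++ bw (sub r x.1) x.2) ++ W q); first by rewrite -!catA.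
rewrite item // -catA; apply: IH => //.
- move=> i hi; exact: (hp i.+1).
- case: q hq hp => [|y q] // hq hp _; symmetry; exact: (hp 0 isT).
Qed.
End Main.

Theorem mainTheorem7 (B : dcx) (n : nat) (hB : is_BXP B n)
  (C : dcx) (hC : is_dcomplex C)
  (f : forall m, cell C m -> cell B m) (hf : is_labeling f)
  (k : nat) (c : cell C k.+2)
  (q : seq bitem) (hq : closed_bpath k.+2 q) :
  leM [:: (existT (fun j => cell B j.+1) k.+1 (f k.+2 c), false)]
      (image_word f c q).
Proof.
have hBc : is_dcomplex B by case: hB.
rewrite (image_word_sub hf).
exists (rho (f k.+2 c)); split; first exact: (rstM (RPidem _)).
case: hq => [hv [hp hc]].
symmetry.
have := chain hBc (f k.+2 c) (a := 0) hv hp.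
have g0 : g (f k.+2 c) 0 = [::] by [].
rewrite g0 /= => H.
have {}H := H (fun hn => (hc hn).1).
rewrite H.
case: q hv hp hc {H} => [|x q] hv hp hc; first by rewrite /= g0.
have [_ h0] := hc isT.
rewrite /= last_map.
rewrite /= in h0; by rewrite h0 g0.
Qed.
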